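(* Let $\Lambda$ be a rank-2 Bratteli diagram. (1) Suppose a path $\alpha\in\Lambda$ has two factorisations $\alpha=\mu g\nu$ and $\alpha=\beta h\gamma$ in which $g,h\in\Lambda^{e_1}$ are blue edges and $d(\mu)$ and $d(\beta)$ have the same first coordinate. Then $o(g)=o(h)$. (2) For every blue path $\beta=\beta_1\beta_2\cdots\beta_n$ with blue edges $\beta_1,\dots,\beta_n$, $o(\beta)=\operatorname{lcm}(o(\beta_1),\dots,o(\beta_n))$.
   Context: A $2$-graph is a countable category $\Lambda$ with a functor $d:\Lambda\to\mathbb N^2$ satisfying unique factorisation (if $d(\lambda)=m+n$ there are unique $\mu,\nu$ with $d(\mu)=m,d(\nu)=n,\lambda=\mu\nu$). Vertices = degree-$0$ paths; $r,s$ range/source; $\Lambda^n=d^{-1}(n)$; $e_1=(1,0),e_2=(0,1)$; $vE=E\cap r^{-1}(v)$, $Ev=E\cap s^{-1}(v)$. Row-finite: each $v\Lambda^n$ finite. Blue paths: degree in $\mathbb N e_1$; red paths: degree in $\mathbb Ne_2$. $\lambda(m,n)$ is the unique path with $\lambda=\lambda'\lambda(m,n)\lambda''$, $d(\lambda')=m$, $d(\lambda(m,n))=n-m$; $\lambda(n)=\lambda(n,n)$. A cycle: $d(\lambda)\ne0$, $r(\lambda)=s(\lambda)$, $\lambda(n)\ne s(\lambda)$ for $0<n<d(\lambda)$; isolated: no $n\le d(\lambda)$ with $r(\lambda)\Lambda^n\setminus\{\lambda(0,n)\}\neq\emptyset$ and no $n\le d(\lambda)$ with $\Lambda^ns(\lambda)\setminus\{\lambda(d(\lambda)-n,d(\lambda))\}\neq\emptyset$.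 A rank-2 Bratteli diagram of depth $N\in\mathbb N\cup\{\infty\}$ is a row-finite 2-graph with $\Lambda^0=\bigsqcup_{0\le n\le N}V_n$ (all $n\in\mathbb N$ if $N=\infty$), each $V_n$ nonempty finite, such that: every blue edge $e$ has $r(e)\in V_n,s(e)\in V_{n+1}$ for some $n$; every vertex $v$ with $\Lambda^{e_1}v=\emptyset$ lies in $V_0$ and every vertex $v$ with $v\Lambda^{e_1}=\emptyset$ lies in $V_N$ (none if $N=\infty$); every vertex lies on an isolated cycle of red edges and every red edge has range and source in the same $V_n$. For a blue path $\alpha$, let $f$ be the unique red edge with $s(f)=r(\alpha)$ and $\mathcal F(\alpha)$ the unique blue path with $f\alpha=\mathcal F(\alpha)f'$ for some red edge $f'$; $o(\alpha)=\min\{k>0:\mathcal F^k(\alpha)=\alpha\}$. *)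

(* Defs.v *)
From mathcomp Require Import all_boot.
From Stdlib Require Import ClassicalEpsilon.
Set Implicit Arguments. Unset Strict Implicit. Unset Printing Implicit Defensive.

(** Raw data of a (countable) category with a degree map to N^2.
    Objects = vertices (identified with the degree-0 paths idm v),
    morphisms = paths.  Composition [cmp l m] = "l m" (l after m, so
    src l = rng m is required), as in the paper's convention for k-graphs. *)
Record graph2 := Graph2 {
  Obj : countType;
  Mor : countType;
  rng : Mor -> Obj;
  src : Mor -> Obj;
  idm : Obj -> Mor;
  cmp : Mor -> Mor -> Mor;
  deg : Mor -> nat * nat }.

Definition dadd (p q : nat * nat) : nat * nat := (p.1 + q.1, p.2 + q.2)%N.
Definition dsub (p q : nat * nat) : nat * nat := (p.1 - q.1, p.2 - q.2)%N.
Definition dle (p q : nat * nat) : Prop := (p.1 <= q.1)%N /\ (p.2 <= q.2)%N.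
Definition e1 : nat * nat := (1, 0)%N.
Definition e2 : nat * nat := (0, 1)%N.
Definition d0 : nat * nat := (0, 0)%N.

Section TwoGraph.
Context (L : graph2).
Local Notation Mor := (Mor L).
Local Notation Obj := (Obj L).
Local Notation rng := (@rng L).
Local Notation src := (@src L).
Local Notation idm := (@idm L).
Local Notation cmp := (@cmp L).
Local Notation deg := (@deg L).

Definition is_2graph : Prop :=
  (forall v, rng (idm v) = v /\ src (idm v) = v) /\
  (forall l m, src l = rng m -> rng (cmp l m) = rng l /\ src (cmp l m) = src m) /\
  (forall l, cmp (idm (rng l)) l = l /\ cmp l (idm (src l)) = l) /\
  (forall l m n, src l = rng m -> src m = rng n ->
         cmp (cmp l m) n = cmp l (cmp m n)) /\
  (forall v, deg (idm v) = d0) /\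
  (forall l m, src l = rng m -> deg (cmp l m) = dadd (deg l) (deg m)) /\
  (forall l m n, deg l = dadd m n ->
         exists! p : Mor * Mor,
           [/\ src p.1 = rng p.2, deg p.1 = m, deg p.2 = n & l = cmp p.1 p.2]).

Definition row_finite : Prop :=
  forall v n, exists s : seq Mor, forall l, rng l = v -> deg l = n -> l \in s.

Definition blue (l : Mor) : Prop := (deg l).2 = 0%N.
Definition red (l : Mor) : Prop := (deg l).1 = 0%N.

(** [seg l m n p] : p = l(m,n), i.e. l = l' p l'' with d(l') = m and
    d(p) = n - m  (for m <= n <= d(l)). *)
Definition seg (l : Mor) (m n : nat * nat) (p : Mor) : Prop :=
  dle m n /\ dle n (deg l) /\
  exists a b, [/\ src a = rng p, src p = rng b, deg a = m, deg p = dsub n m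
                & l = cmp a (cmp p b)].

(** l(n) = v (as the degree-0 path idm v). *)
Definition vtx (l : Mor) (n : nat * nat) (v : Obj) : Prop := seg l n n (idm v).

Definition is_cycle (l : Mor) : Prop :=
  [/\ deg l <> d0, rng l = src l &
      forall n, dle n (deg l) -> n <> d0 -> n <> deg l -> ~ vtx l n (src l)].

Definition isolated (l : Mor) : Prop :=
  (forall n m, dle n (deg l) -> rng m = rng l -> deg m = n -> seg l d0 n m) /\
  (forall n m, dle n (deg l) -> src m = src l -> deg m = n ->
     seg l (dsub (deg l) n) (deg l) m).

Definition lies_on (v : Obj) (l : Mor) : Prop :=
  exists n, dle n (deg l) /\ vtx l n v.

Definition le_depth (n : nat) (N : option nat) : Prop :=
  match N with Some N => (n <= N)%N | None => True end.

(** Rank-2 Bratteli diagram of depth N (None = infinity); V_n = lev^-1(n). *)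
Definition bratteli (N : option nat) (lev : Obj -> nat) : Prop :=
  (forall v, le_depth (lev v) N) /\
  (forall n, le_depth n N -> exists v, lev v = n) /\
  (forall n, exists s : seq Obj, forall v, lev v = n -> v \in s) /\
  (forall e, deg e = e1 -> lev (src e) = (lev (rng e)).+1) /\
  (forall v, (forall e, deg e = e1 -> src e <> v) -> lev v = 0%N) /\
  (forall v, (forall e, deg e = e1 -> rng e <> v) -> N = Some (lev v)) /\
  (forall v, exists l, [/\ red l, is_cycle l, isolated l & lies_on v l]) /\
  (forall f, deg f = e2 -> lev (rng f) = lev (src f)).

Definition Frel (a b : Mor) : Prop :=
  exists f f', [/\ deg f = e2, deg f' = e2, src f = rng a, src b = rng f'
                   & blue b /\ cmp f a = cmp b f'].

Definition Fmap (a : Mor) : Mor := epsilon (inhabits a) (Frel a).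

Definition ordF (a : Mor) : nat :=
  epsilon (inhabits 0%N) (fun k => [/\ (0 < k)%N, iter k Fmap a = a &
                    forall j, (0 < j)%N -> (j < k)%N -> iter j Fmap a <> a]).

Fixpoint cmps (b : Mor) (bs : seq Mor) : Mor :=
  match bs with [::] => b | c :: cs => cmp b (cmps c cs) end.

Definition composable_seq (b : Mor) (bs : seq Mor) : bool :=
  path (fun x y => src x == rng y) b bs.

End TwoGraph.

(* Main.v *)
Require Import Defs.
From mathcomp Require Import all_boot.
From mathcomp Require Import zify.
From Stdlib Require Import ClassicalEpsilon Classical FunctionalExtensionality PropExtensionality.
Set Implicit Arguments. Unset Strict Implicit. Unset Printing Implicit Defensive.

Section G.
Variable L : graph2.
Hypothesis HL : is_2graph L.

Lemma rng_idm (v : Obj L) : rng (idm v) = v.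
Proof. by case: HL => H _; case: (H v). Qed.
Lemma src_idm (v : Obj L) : src (idm v) = v.
Proof. by case: HL => H _; case: (H v). Qed.
Lemma rng_cmp (l m : Mor L) : src l = rng m -> rng (cmp l m) = rng l.
Proof. by case: HL => _ [H _] E; case: (H l m E). Qed.
Lemma src_cmp (l m : Mor L) : src l = rng m -> src (cmp l m) = src m.
Proof. by case: HL => _ [H _] E; case: (H l m E). Qed.
Lemma cmp1l (l : Mor L) : cmp (idm (rng l)) l = l.
Proof. by case: HL => _ [_ [H _]]; case: (H l). Qed.
Lemma cmp1r (l : Mor L) : cmp l (idm (src l)) = l.
Proof. by case: HL => _ [_ [H _]]; case: (H l). Qed.
Lemma cmpA (l m n : Mor L) : src l = rng m -> src m = rng n -> cmp (cmp l m) n = cmp l (cmp m n).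
Proof. by case: HL => _ [_ [_ [H _]]]; apply: H. Qed.
Lemma deg_idm (v : Obj L) : deg (idm v) = d0.
Proof. by case: HL => _ [_ [_ [_ [H _]]]]. Qed.
Lemma deg_cmp (l m : Mor L) : src l = rng m -> deg (cmp l m) = dadd (deg l) (deg m).
Proof. by case: HL => _ [_ [_ [_ [_ [H _]]]]]; apply: H. Qed.
Lemma UF (l : Mor L) m n : deg l = dadd m n -> exists! p : Mor L * Mor L,
  [/\ src p.1 = rng p.2, deg p.1 = m, deg p.2 = n & l = cmp p.1 p.2].
Proof. by case: HL => _ [_ [_ [_ [_ [_ H]]]]]; apply: H. Qed.

Lemma fact (l : Mor L) m n : deg l = dadd m n ->
  exists a b, [/\ src a = rng b, deg a = m, deg b = n & l = cmp a b].
Proof. move/UF=> [[a b] [[/= ? ? ? ?] _]]; by exists a, b. Qed.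

Lemma dadd_canl (x y z : nat*nat) : dadd x y = dadd x z -> y = z.
Proof. case: x => ? ?; case: y => ? ?; case: z => ? ?; rewrite /dadd /=; case=> ? ?; f_equal; lia. Qed.
Lemma dadd_canr (x y z : nat*nat) : dadd y x = dadd z x -> y = z.
Proof. case: x => ? ?; case: y => ? ?; case: z => ? ?; rewrite /dadd /=; case=> ? ?; f_equal; lia. Qed.

Lemma UFl (a b a' b' : Mor L) : src a = rng b -> src a' = rng b' ->
  cmp a b = cmp a' b' -> deg a = deg a' -> a = a' /\ b = b'.
Proof.
move=> E E' Ec Ed.
have Db : deg b = deg b'.
  by apply: (@dadd_canl (deg a)); rewrite -(deg_cmp E) Ec (deg_cmp E') Ed.
have [p [_ Hu]] := UF (deg_cmp E).
have h1 := Hu (a, b) (And4 E erefl erefl erefl).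
have h2 := Hu (a', b') (And4 E' (esym Ed) (esym Db) Ec).
by rewrite h1 in h2; case: h2 => -> ->.
Qed.

Lemma UFr (a b a' b' : Mor L) : src a = rng b -> src a' = rng b' ->
  cmp a b = cmp a' b' -> deg b = deg b' -> a = a' /\ b = b'.
Proof.
move=> E E' Ec Ed; apply: UFl => //.
by apply: (@dadd_canr (deg b)); rewrite -(deg_cmp E) Ec (deg_cmp E') Ed.
Qed.

Lemma deg0_idm (a : Mor L) : deg a = d0 -> a = idm (rng a) /\ a = idm (src a).
Proof.
move=> Da.
have [p [_ Hu]] := UF (m:=d0) (n:=d0) (l:=a) Da.
have h1 := Hu (idm (rng a), a) (And4 (src_idm _) (deg_idm _) Da (esym (cmp1l a))).
have h2 := Hu (a, idm (src a)) (And4 (esym (rng_idm _)) Da (deg_idm _) (esym (cmp1r a))).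
by rewrite h1 in h2; case: h2 => -> <-.
Qed.

Variable N : option nat.
Variable lev : Obj L -> nat.
Hypothesis HB : bratteli N lev.

Lemma cycle_data (v : Obj L) : exists (l a b : Mor L) (j k : nat),
  [/\ deg l = (0,k)%N, (0 < k)%N, (j <= k)%N, src a = v & rng b = v] /\
  [/\ deg a = (0,j)%N, deg b = (0,k-j)%N, l = cmp a b, src a = rng b & rng l = src l] /\
  isolated l.
Proof.
case: HB => _ [_ [_ [_ [_ [_ [Hc _]]]]]].
have [l [Hred [Hd0 Hrs _] Hiso [n [Hn [_ [_ [a [b [Ea Eb Da Di El]]]]]]]]] := Hc v.
rewrite rng_idm in Ea; rewrite src_idm in Eb.
rewrite Eb cmp1l in El.
have Dl := deg_cmp (etrans Ea Eb); rewrite -El in Dl.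
clear Di; move: Hred Hd0 Hn Dl; rewrite /red /dle /dadd /d0 Da.
case Edl: (deg l) => [l1 l2]; case Edb: (deg b) => [b1 b2].
case: n Da => n1 n2 Da /= Hr H0 [Hn1 Hn2] [Eb1 Eb2]; subst l1.
have Hk : 0 < l2 by case: (l2) H0.
clear H0.
exists l, a, b, n2, l2; split; [split|split; [split|]] => //.
- rewrite Da; f_equal; lia.
- rewrite Edb; f_equal; lia.
- by rewrite Ea.
Qed.

Lemma seg_uniq (l : Mor L) m n p p' : seg l m n p -> seg l m n p' -> p = p'.
Proof.
move=> [_ [_ [a [b [E1 E2 D1 D2 E]]]]] [_ [_ [a' [b' [E1' E2' D1' D2' E']]]]].
have [_ H] := UFl (etrans E1 (esym (rng_cmp E2))) (etrans E1' (esym (rng_cmp E2')))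
  (etrans (esym E) E') (etrans D1 (esym D1')).
by have [] := UFl E2 E2' H (etrans D2 (esym D2')).
Qed.

Lemma red_out_ex (v : Obj L) : exists f : Mor L, deg f = e2 /\ src f = v.
Proof.
have [l [a [b [j [k [[Dl Hk Hj Ea Eb] [[Da Db El Eab Hrs] _]]]]]]] := cycle_data v.
case: j Hj Da Db => [|j] Hj Da Db.
- have [_ Ha] := deg0_idm Da.
  have Hsl : src l = v by rewrite -Hrs El (rng_cmp Eab) Ha rng_idm.
  have Dl' : deg l = dadd (0,k.-1)%N e2 by rewrite Dl /dadd /=; f_equal; lia.
  have [x [f [Exf _ Df Ef]]] := fact Dl'.
  exists f; split => //; by rewrite -Hsl Ef (src_cmp Exf).
- have Da' : deg a = dadd (0,j)%N e2 by rewrite Da /dadd /=; f_equal; lia.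
  have [x [f [Exf _ Df Ef]]] := fact Da'.
  exists f; split => //; by rewrite -Ea Ef (src_cmp Exf).
Qed.

Lemma red_out_uniq (f f' : Mor L) : deg f = e2 -> deg f' = e2 -> src f = src f' -> f = f'.
Proof.
move=> Df Df' Es.
have [l [a [b [j [k [[Dl Hk Hj Ea Eb] [[Da Db El Eab Hrs] [_ I2]]]]]]]] := cycle_data (src f).
have Hslb : src l = src b by rewrite El (src_cmp Eab).
case: j Hj Da Db => [|j] Hj Da Db.
- have [_ Ha] := deg0_idm Da.
  have Hsl : src l = src f by rewrite -Hrs El (rng_cmp Eab) Ha rng_idm.
  have Hle : dle e2 (deg l) by rewrite Dl /dle /=; split; lia.
  apply: seg_uniq (I2 _ _ Hle _ Df) (I2 _ _ Hle _ Df'); by rewrite Hsl.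
- have Hfb : src f = rng b by [].
  have Hfb' : src f' = rng b by rewrite -Es.
  have Dm : deg (cmp f b) = dadd e2 (0, k - j.+1)%N by rewrite (deg_cmp Hfb) Df Db.
  have Dm' : deg (cmp f' b) = dadd e2 (0, k - j.+1)%N by rewrite (deg_cmp Hfb') Df' Db.
  have Hle : dle (dadd e2 (0, k - j.+1)%N) (deg l) by rewrite Dl /dle /=; split; lia.
  have H := seg_uniq (I2 _ _ Hle (etrans (src_cmp Hfb) (esym Hslb)) Dm)
                      (I2 _ _ Hle (etrans (src_cmp Hfb') (esym Hslb)) Dm').
  by have [] := UFl Hfb Hfb' H (etrans Df (esym Df')).
Qed.

Lemma red_in_uniq (f f' : Mor L) : deg f = e2 -> deg f' = e2 -> rng f = rng f' -> f = f'.
Proof.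
move=> Df Df' Es.
have [l [a [b [j [k [[Dl Hk Hj Ea Eb] [[Da Db El Eab Hrs] [I1 _]]]]]]]] := cycle_data (rng f).
have Hrla : rng l = rng a by rewrite El (rng_cmp Eab).
case: (ltnP j k) => Hjk.
- have Haf : src a = rng f by [].
  have Haf' : src a = rng f' by rewrite -Es.
  have Dm : deg (cmp a f) = dadd (0, j)%N e2 by rewrite (deg_cmp Haf) Df Da.
  have Dm' : deg (cmp a f') = dadd (0, j)%N e2 by rewrite (deg_cmp Haf') Df' Da.
  have Hle : dle (dadd (0, j)%N e2) (deg l) by rewrite Dl /dle /=; split; lia.
  have H := seg_uniq (I1 _ _ Hle (etrans (rng_cmp Haf) (esym Hrla)) Dm)
                      (I1 _ _ Hle (etrans (rng_cmp Haf') (esym Hrla)) Dm').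
  by have [] := UFr Haf Haf' H (etrans Df (esym Df')).
- have Db0 : deg b = d0 by rewrite Db /d0; f_equal; lia.
  have [Hb _] := deg0_idm Db0.
  have Hrl : rng l = rng f by rewrite Hrs El (src_cmp Eab) Hb src_idm.
  have Hle : dle e2 (deg l) by rewrite Dl /dle /=; split; lia.
  apply: seg_uniq (I1 _ _ Hle _ Df) (I1 _ _ Hle _ Df'); by rewrite Hrl.
Qed.

Lemma Frel_ex (a : Mor L) : blue a -> exists b, Frel a b.
Proof.
move=> Ba.
have [f [Df Ef]] := red_out_ex (rng a).
have Dfa : deg (cmp f a) = dadd (deg a) e2.
  by rewrite (deg_cmp Ef) Df /dadd /=; f_equal; lia.
have [b [f1 [Ebf Db Df1 Ec]]] := fact Dfa.
exists b, f, f1; split => //; split => //; by rewrite /blue Db.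
Qed.

Lemma Frel_fun (a b b' : Mor L) : Frel a b -> Frel a b' -> b = b'.
Proof.
move=> [f [f1 [Df Df1 Ef Eb [_ Ec]]]] [g [g1 [Dg Dg1 Eg Eb' [_ Ec']]]].
have efg : f = g by apply: red_out_uniq => //; rewrite Ef Eg.
subst g.
by have [] := UFr Eb Eb' (etrans (esym Ec) Ec') (etrans Df1 (esym Dg1)).
Qed.

Lemma Frel_inj (a a' b : Mor L) : Frel a b -> Frel a' b -> a = a'.
Proof.
move=> [f [f1 [Df Df1 Ef Eb [_ Ec]]]] [g [g1 [Dg Dg1 Eg Eb' [_ Ec']]]].
have efg : f1 = g1 by apply: red_in_uniq => //; rewrite -Eb -Eb'.
subst g1.
by have [] := UFl Ef Eg (etrans Ec (esym Ec')) (etrans Df (esym Dg)).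
Qed.

Lemma Frel_deg (a b : Mor L) : Frel a b -> deg b = deg a.
Proof.
move=> [f [f1 [Df Df1 Ef Eb [_ Ec]]]].
have := deg_cmp Ef; rewrite Ec (deg_cmp Eb) Df Df1 /dadd /=.
case: (deg a) => x y; case: (deg b) => z w /=; case=> ? ?; f_equal; lia.
Qed.

Lemma Frel_lev (a b : Mor L) : Frel a b -> lev (rng b) = lev (rng a).
Proof.
move=> [f [f1 [Df Df1 Ef Eb [_ Ec]]]].
case: HB => _ [_ [_ [_ [_ [_ [_ Hr]]]]]].
by rewrite -(rng_cmp Eb) -Ec (rng_cmp Ef) Hr // Ef.
Qed.

Lemma Fmap_spec (a : Mor L) : blue a -> Frel a (Fmap a).
Proof. move=> Ba; rewrite /Fmap; apply: epsilon_spec; exact: Frel_ex. Qed.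

Lemma Fmap_deg (a : Mor L) : blue a -> deg (Fmap a) = deg a.
Proof. by move/Fmap_spec/Frel_deg. Qed.

Lemma Fmap_blue (a : Mor L) : blue a -> blue (Fmap a).
Proof. by move=> Ba; rewrite /blue Fmap_deg. Qed.

Lemma iterF_deg k (a : Mor L) : blue a -> deg (iter k (@Fmap L) a) = deg a.
Proof.
move=> Ba; elim: k => //= k IH.
by rewrite Fmap_deg // /blue IH.
Qed.

Lemma iterF_blue k (a : Mor L) : blue a -> blue (iter k (@Fmap L) a).
Proof. by move=> Ba; rewrite /blue iterF_deg. Qed.

Lemma Fmap_inj (a a' : Mor L) : blue a -> blue a' -> Fmap a = Fmap a' -> a = a'.
Proof.
move=> Ba Ba' E; apply: (Frel_inj (Fmap_spec Ba)); rewrite E; exact: Fmap_spec.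
Qed.

Lemma iterF_inj k (a a' : Mor L) : blue a -> blue a' ->
  iter k (@Fmap L) a = iter k (@Fmap L) a' -> a = a'.
Proof.
move=> Ba Ba'; elim: k => //= k IH E; apply: IH.
exact: Fmap_inj (iterF_blue _ Ba) (iterF_blue _ Ba') E.
Qed.

Lemma iterF_lev k (a : Mor L) : blue a -> lev (rng (iter k (@Fmap L) a)) = lev (rng a).
Proof.
move=> Ba; elim: k => //= k IH.
by rewrite (Frel_lev (Fmap_spec (iterF_blue k Ba))).
Qed.

Lemma commute t : forall (a r b r' : Mor L), blue a -> deg r = (0,t)%N -> deg r' = (0,t)%N ->
  src r = rng a -> src b = rng r' -> deg b = deg a -> cmp r a = cmp b r' ->
  b = iter t (@Fmap L) a.
Proof.
elim: t => [|t IH] a r b r' Ba Dr Dr' Era Ebr Dba E.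
- move: E.
  have -> : r = idm (rng a) by rewrite -Era; case: (deg0_idm Dr).
  have -> : r' = idm (src b) by rewrite Ebr; case: (deg0_idm Dr').
  by rewrite cmp1l cmp1r.
have Dr1 : deg r = dadd (0,t)%N e2 by rewrite Dr /dadd /=; f_equal; lia.
have [r1 [f [Er1f Dr1' Df Er]]] := fact Dr1.
have Efa : src f = rng a by rewrite -(src_cmp Er1f) -Er.
have Dfa : deg (cmp f a) = dadd (deg a) e2 by rewrite (deg_cmp Efa) Df /dadd/=; f_equal; lia.
have [c [f2 [Ecf Dc Df2 Ec]]] := fact Dfa.
have Hc : Frel a c by exists f, f2; split => //; split => //; rewrite /blue Dc.
have Hcm : c = Fmap a := Frel_fun Hc (Fmap_spec Ba).
have Dr2 : deg r' = dadd (0,t)%N e2 by rewrite Dr' /dadd /=; f_equal; lia.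
have [r2 [f3 [Er2f Dr2' Df3 Er']]] := fact Dr2.
have Er1c : src r1 = rng c by rewrite Er1f -(rng_cmp Ecf) -Ec (rng_cmp Efa).
have Ebr2 : src b = rng r2 by rewrite Ebr Er' (rng_cmp Er2f).
have E2 : cmp (cmp r1 c) f2 = cmp (cmp b r2) f3.
  by rewrite (cmpA Er1c Ecf) -Ec -(cmpA Er1f Efa) -Er E Er' (cmpA Ebr2 Er2f).
have [E3 _] := UFr (etrans (src_cmp Er1c) Ecf) (etrans (src_cmp Ebr2) Er2f) E2
   (etrans Df2 (esym Df3)).
have Bc : blue c by rewrite /blue Dc.
rewrite iterSr -Hcm.
apply: (IH c r1 b r2) => //; by rewrite Dba Dc.
Qed.

Lemma part1_aux (a mu g nu be h ga : Mor L) :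
  src mu = rng g -> src g = rng nu -> src be = rng h -> src h = rng ga ->
  a = cmp mu (cmp g nu) -> a = cmp be (cmp h ga) ->
  deg g = e1 -> deg h = e1 -> (deg mu).1 = (deg be).1 -> ((deg mu).2 <= (deg be).2)%N ->
  exists t, g = iter t (@Fmap L) h.
Proof.
move=> Emg Egn Ebh Ehg Ea Ea' Dg Dh D1 D2.
set t := ((deg be).2 - (deg mu).2)%N.
have Dbe : deg be = dadd (deg mu) (0,t)%N.
  rewrite /dadd /t /=; move: D1 D2; case: (deg be) => x y; case: (deg mu) => z w /= -> ?.
  f_equal; lia.
have [be1 [r [Ebr Db1 Dr Ebe]]] := fact Dbe.
have Erh : src r = rng h by rewrite -Ebh Ebe (src_cmp Ebr).
have Ehg' : src r = rng (cmp h ga) by rewrite (rng_cmp Ehg).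
have E1 : cmp mu (cmp g nu) = cmp be1 (cmp r (cmp h ga)).
  by rewrite -Ea Ea' Ebe (cmpA Ebr Ehg').
have [_ E2] := UFl (etrans Emg (esym (rng_cmp Egn)))
   (etrans Ebr (esym (rng_cmp Ehg'))) E1 (esym Db1).
have Dnu : deg nu = dadd (0,t)%N (deg ga).
  have := congr1 (@deg L) E2.
  rewrite (deg_cmp Egn) (deg_cmp Ehg') (deg_cmp Ehg) Dg Dh Dr /dadd /=.
  case: (deg nu) => x y; case: (deg ga) => z w /=; case=> ? ?; f_equal; lia.
have [nu1 [nu2 [En12 Dn1 Dn2 Enu]]] := fact Dnu.
have Egn1 : src g = rng nu1 by rewrite Egn Enu (rng_cmp En12).
have E3 : cmp (cmp g nu1) nu2 = cmp (cmp r h) ga.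
  by rewrite (cmpA Egn1 En12) -Enu E2 (cmpA Erh Ehg).
have [E4 _] := UFr (etrans (src_cmp Egn1) En12) (etrans (src_cmp Erh) Ehg) E3 Dn2.
exists t; apply: (commute (r:=r) (r':=nu1)) => //.
- by rewrite /blue Dh.
- by rewrite Dg Dh.
Qed.

Lemma ordF_iter t (h : Mor L) : blue h -> ordF (iter t (@Fmap L) h) = ordF h.
Proof.
move=> Bh; rewrite /ordF; congr epsilon.
apply: functional_extensionality => k; apply: propositional_extensionality.
have key : forall j, iter j (@Fmap L) (iter t (@Fmap L) h) = iter t (@Fmap L) h <->
                     iter j (@Fmap L) h = h.
  move=> j; rewrite -iterD addnC iterD; split; last by move=> ->.
  exact: (iterF_inj (iterF_blue _ Bh) Bh).
split=> -[H1 H2 H3]; split => //; first by apply/key.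
- by move=> j J1 J2 /key; apply: H3.
- by apply/key.
- by move=> j J1 J2 /key; apply: H3.
Qed.

Lemma F_cmp (x y : Mor L) : blue x -> blue y -> src x = rng y ->
  Fmap (cmp x y) = cmp (Fmap x) (Fmap y) /\ src (Fmap x) = rng (Fmap y).
Proof.
move=> Bx By Exy.
have [f [f1 [Df Df1 Ef Eb1 [_ Ec1]]]] := Fmap_spec Bx.
have [g [f2 [Dg Df2 Eg Eb2 [_ Ec2]]]] := Fmap_spec By.
have Ef1g : f1 = g.
  apply: red_out_uniq => //.
  by rewrite Eg -Exy -(src_cmp Ef) Ec1 (src_cmp Eb1).
subst g.
have Es : src (Fmap x) = rng (Fmap y).
  by rewrite Eb1 -(rng_cmp Eg) Ec2 (rng_cmp Eb2).
split => //.
have Bxy : blue (cmp x y) by rewrite /blue (deg_cmp Exy) /dadd /= Bx By.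
apply: (Frel_fun (Fmap_spec Bxy)).
exists f, f2; split => //.
- by rewrite (rng_cmp Exy).
- by rewrite (src_cmp Es).
split.
- by rewrite /blue (deg_cmp Es) /dadd /= (Fmap_blue Bx) (Fmap_blue By).
by rewrite -(cmpA Ef Exy) Ec1 (cmpA Eb1 Eg) Ec2 -(cmpA Es Eb2).
Qed.

Lemma iterF_cmp k (x y : Mor L) : blue x -> blue y -> src x = rng y ->
  iter k (@Fmap L) (cmp x y) = cmp (iter k (@Fmap L) x) (iter k (@Fmap L) y) /\
  src (iter k (@Fmap L) x) = rng (iter k (@Fmap L) y).
Proof.
move=> Bx By Exy; elim: k => [|k [IH1 IH2]] //=.
rewrite IH1; exact: F_cmp (iterF_blue _ Bx) (iterF_blue _ By) IH2.
Qed.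

Lemma rng_cmps (b : Mor L) bs : composable_seq b bs -> rng (cmps b bs) = rng b.
Proof.
elim: bs b => [|c cs IH] b //= /andP [/eqP Ebc Hc].
by rewrite rng_cmp // IH.
Qed.

Lemma blue_cmps (b : Mor L) bs : all (fun x => deg x == e1) (b :: bs) ->
  composable_seq b bs -> blue (cmps b bs).
Proof.
elim: bs b => [|c cs IH] b /=.
  by rewrite andbT => /eqP Db _; rewrite /blue Db.
move=> /andP [/eqP Db Hall] /andP [/eqP Ebc Hc].
rewrite /blue deg_cmp ?rng_cmps // /dadd /= Db /=.
exact: IH.
Qed.

Lemma fix_cmps k (b : Mor L) bs : all (fun x => deg x == e1) (b :: bs) ->
  composable_seq b bs ->
  (iter k (@Fmap L) (cmps b bs) = cmps b bs <->
   all (fun x => iter k (@Fmap L) x == x) (b :: bs)).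
Proof.
elim: bs b => [|c cs IH] b /=.
  by move=> _ _; rewrite andbT; split => [->|/eqP].
move=> /andP [/eqP Db Hall] /andP [/eqP Ebc Hc].
have Bb : blue b by rewrite /blue Db.
have BC : blue (cmps c cs) by exact: blue_cmps.
have Sb : src b = rng (cmps c cs) by rewrite rng_cmps.
have [E1 E2] := iterF_cmp k Bb BC Sb.
rewrite E1; split.
- move=> E.
  have [-> EC] := UFl E2 Sb E (iterF_deg k Bb).
  by rewrite eqxx /=; apply/(IH c Hall Hc).
- move=> /andP [/eqP -> Hr].
  by rewrite ((IH c Hall Hc).2 Hr).
Qed.

Lemma dvd_foldr_lcm (ns : seq nat) k :
  (foldr lcmn 1%N ns %| k) = all (fun n => n %| k) ns.
Proof. elim: ns => [|n ns IH] /=; [by rewrite dvd1n | by rewrite dvdn_lcm IH]. Qed.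

Lemma foldr_lcm_gt0 (ns : seq nat) : all (fun n => 0 < n) ns -> 0 < foldr lcmn 1%N ns.
Proof. elim: ns => [|n ns IH] //= /andP [H1 H2]; by rewrite lcmn_gt0 H1 IH. Qed.

Hypothesis HR : row_finite L.

Lemma fin_period (x : Mor L) : blue x -> exists k, 0 < k /\ iter k (@Fmap L) x = x.
Proof.
move=> Bx.
case: HB => _ [_ [Hfin _]].
have [sv Hsv] := Hfin (lev (rng x)).
have [s Hs] : exists s : seq (Mor L), forall y, deg y = deg x -> rng y \in sv -> y \in s.
  elim: sv {Hsv} => [|v sv' [s2 Hs2]]; first by exists [::].
  have [s1 Hs1] := HR v (deg x).
  exists (s1 ++ s2) => y Dy; rewrite inE mem_cat => /orP [/eqP Ev | Hin]; apply/orP.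
  + by left; apply: Hs1.
  + by right; apply: Hs2.
apply: NNPP => Hno.
have inj : injective (fun i => iter i (@Fmap L) x).
  move=> i j /= E.
  have gen : forall i j, i < j -> iter i (@Fmap L) x = iter j (@Fmap L) x -> False.
    move=> i' j' Hij E'.
    rewrite -(subnKC (ltnW Hij)) iterD in E'.
    have E'' := iterF_inj (iterF_blue _ Bx) Bx (esym E').
    apply: Hno; exists (j' - i'); split => //; by rewrite subn_gt0.
  case: (ltngtP i j) => // Hij; exfalso; [exact: gen Hij E | exact: gen Hij (esym E)].
have U : uniq (map (fun i => iter i (@Fmap L) x) (iota 0 (size s).+1)).
  by rewrite map_inj_uniq // iota_uniq.
have Sub : {subset map (fun i => iter i (@Fmap L) x) (iota 0 (size s).+1) <= s}.
  move=> y /mapP [i _ ->]; apply: Hs; first exact: iterF_deg.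
  by apply: Hsv; rewrite iterF_lev.
by have := uniq_leq_size U Sub; rewrite size_map size_iota ltnn.
Qed.

Lemma iter_mul (x : Mor L) m q : iter m (@Fmap L) x = x -> iter (q * m) (@Fmap L) x = x.
Proof. move=> Em; elim: q => [|q IH] //; by rewrite mulSn iterD IH Em. Qed.

Lemma period (x : Mor L) : blue x ->
  exists m, 0 < m /\ forall k, iter k (@Fmap L) x = x <-> m %| k.
Proof.
move=> Bx.
have [k [Hk Ek]] := fin_period Bx.
pose P := fun k => (0 < k) && (iter k (@Fmap L) x == x).
have exP : exists k, P k by exists k; rewrite /P Hk Ek eqxx.
case: (ex_minnP exP) => m /andP [Hm /eqP Em] Hmin.
exists m; split => // j; split.
- move=> Ej.
  have Hmod : iter (j %% m) (@Fmap L) x = x.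
    by move: Ej; rewrite {1}(divn_eq j m) addnC iterD iter_mul.
  case: (posnP (j %% m)) => H0; first by rewrite /dvdn H0.
  have := Hmin (j %% m); rewrite /P H0 Hmod eqxx => /(_ isT).
  by rewrite leqNgt ltn_pmod.
- by move/dvdnP => [q ->]; exact: iter_mul.
Qed.

Lemma ordF_char (x : Mor L) m : 0 < m ->
  (forall k, iter k (@Fmap L) x = x <-> m %| k) -> ordF x = m.
Proof.
move=> Hm H; rewrite /ordF.
set P := (fun k => _).
have Pm : P m.
  split => //; first by apply/H.
  move=> j J1 J2 /H Hd; have := dvdn_leq J1 Hd; by rewrite leqNgt J2.
have := epsilon_spec (inhabits 0%N) P (ex_intro _ m Pm).
set k := epsilon _ _ => -[Hk Ek Hmin].
have Hle : m <= k by apply: dvdn_leq => //; apply/H.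
case: (ltngtP m k) => // Hlt; first by exfalso; apply: (Hmin m Hm Hlt); apply/H.
by move: Hle; rewrite leqNgt Hlt.
Qed.

Lemma ordF_prop (x : Mor L) : blue x ->
  0 < ordF x /\ forall k, iter k (@Fmap L) x = x <-> ordF x %| k.
Proof.
move=> Bx; have [m [Hm H]] := period Bx.
by rewrite (ordF_char Hm H).
Qed.

Lemma main_sec :
  (forall (a mu g nu be h ga : Mor L),
      src mu = rng g -> src g = rng nu -> src be = rng h -> src h = rng ga ->
      a = cmp mu (cmp g nu) -> a = cmp be (cmp h ga) ->
      deg g = e1 -> deg h = e1 -> (deg mu).1 = (deg be).1 ->
      ordF g = ordF h) /\
  (forall (b : Mor L) (bs : seq (Mor L)),
      all (fun x => deg x == e1) (b :: bs) -> composable_seq b bs ->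
      ordF (cmps b bs) = foldr lcmn 1%N (map (@ordF L) (b :: bs))).
Proof.
split.
- move=> a mu g nu be h ga E1 E2 E3 E4 Ea Ea' Dg Dh D1.
  have Bg : blue g by rewrite /blue Dg.
  have Bh : blue h by rewrite /blue Dh.
  case: (leqP (deg mu).2 (deg be).2) => Hle.
  + have [t ->] := part1_aux E1 E2 E3 E4 Ea Ea' Dg Dh D1 Hle.
    exact: ordF_iter.
  + have [t ->] := part1_aux E3 E4 E1 E2 Ea' Ea Dh Dg (esym D1) (ltnW Hle).
    by rewrite ordF_iter.
- move=> b bs Hall Hc.
  have Hpos : forall y, y \in b :: bs -> blue y.
    by move=> y Hy; move/allP: Hall => /(_ y Hy) /eqP Dy; rewrite /blue Dy.
  apply: ordF_char.
  + rewrite foldr_lcm_gt0 // all_map; apply/allP => y Hy /=.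
    by have [] := ordF_prop (Hpos y Hy).
  + move=> k; rewrite (fix_cmps k Hall Hc) dvd_foldr_lcm all_map.
    have -> : all (fun x => iter k (@Fmap L) x == x) (b :: bs) =
              all (preim (@ordF L) (fun n => n %| k)) (b :: bs).
      apply: eq_in_all => y Hy /=.
      have [_ H] := ordF_prop (Hpos y Hy).
      by apply/idP/idP => [/eqP /H | /H /eqP].
    by [].
Qed.
End G.

Theorem lemma5p2 (L : graph2) (N : option nat) (lev : Obj L -> nat) :
  is_2graph L -> row_finite L -> bratteli N lev ->
  (forall (a mu g nu be h ga : Mor L),
      src mu = rng g -> src g = rng nu -> src be = rng h -> src h = rng ga ->
      a = cmp mu (cmp g nu) -> a = cmp be (cmp h ga) ->
      deg g = e1 -> deg h = e1 -> (deg mu).1 = (deg be).1 ->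
      ordF g = ordF h) /\
  (forall (b : Mor L) (bs : seq (Mor L)),
      all (fun x => deg x == e1) (b :: bs) -> composable_seq b bs ->
      ordF (cmps b bs) = foldr lcmn 1%N (map (@ordF L) (b :: bs))).
Proof. move=> HL HR HB; exact: (main_sec HL HB HR). Qed.
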